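(* Let $\mathcal{X}=(X,dX)$ be a directed space. On the set of traces of $\mathcal{X}$, define $f\leq g$ if and only if there exist traces $u,v$ with $g=u\star f\star v$. Then $\leq$ is a preorder. If moreover $\mathcal{X}$ is a pospace (with its increasing paths as dipaths), then $\leq$ is a partial order.
   Context: A directed space $\mathcal{X}=(X,dX)$ is a topological space $X$ with a set $dX$ of continuous paths $[0,1]\to X$ (dipaths) containing constant paths, closed under monotone reparametrization and under concatenation. A trace is the equivalence class of a dipath modulo monotone reparametrization, and concatenation $\star$ of (composable) traces is induced by concatenation of dipaths. A pospace is a Hausdorff space $X$ with a partial order $\leq_X$ that is closed in $X\times X$; it is regarded as a directed space whose dipaths are the continuous order-preserving maps $[0,1]\to X$ ($[0,1]$ with its usual order). *)

(* Defs.v *)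
From HB Require Import structures.
From mathcomp Require Import all_boot all_order all_algebra.
From mathcomp Require Import all_classical all_reals all_analysis.
From Stdlib Require Import Relations.
Set Implicit Arguments. Unset Strict Implicit. Unset Printing Implicit Defensive.
Import Order.TTheory GRing.Theory Num.Theory numFieldNormedType.Exports.
Local Open Scope classical_set_scope.
Local Open Scope ring_scope.

Section DirectedSpaces.
Variable R : realType.

(* Paths are maps R -> X of which only the restriction to [0,1] matters. *)
Definition I01 : set R := `[0, 1].

Definition is_path (X : topologicalType) (p : R -> X) : Prop :=
  {within I01, continuous p}.

Definition reparam (phi : R -> R) : Prop :=
  {within I01, continuous phi} /\
  (forall s t, I01 s -> I01 t -> s <= t -> phi s <= phi t) /\
  phi @` I01 = I01.

Definition concat (X : Type) (p q : R -> X) : R -> X :=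
  fun t => if t <= 2^-1 then p (2 * t) else q (2 * t - 1).

Record dspace (X : topologicalType) (dX : set (R -> X)) : Prop := {
  ds_path : forall p, dX p -> is_path p;
  ds_const : forall x : X, dX (fun _ => x);
  ds_reparam : forall p phi, dX p -> reparam phi -> dX (p \o phi);
  ds_concat : forall p q, dX p -> dX q -> p 1 = q 0 -> dX (concat p q) }.

Definition reparam_step (X : Type) (p q : R -> X) : Prop :=
  exists phi, reparam phi /\ forall t, I01 t -> q t = p (phi t).

Definition same_trace (X : Type) : relation (R -> X) :=
  clos_refl_sym_trans _ (@reparam_step X).

(* The relation f <= g on traces, via representatives:
   g = u * f * v for some dipaths u, v (composable). *)
Definition trace_le (X : Type) (dX : set (R -> X)) (f g : R -> X) : Prop :=
  exists u v, dX u /\ dX v /\ u 1 = f 0 /\ f 1 = v 0 /\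
    same_trace g (concat (concat u f) v).

Definition trace_preorder (X : Type) (dX : set (R -> X)) : Prop :=
  (forall f f' g g', dX f -> dX f' -> dX g -> dX g' ->
     same_trace f f' -> same_trace g g' -> trace_le dX f g -> trace_le dX f' g')
  /\ (forall f, dX f -> trace_le dX f f)
  /\ (forall f g h, dX f -> dX g -> dX h ->
        trace_le dX f g -> trace_le dX g h -> trace_le dX f h).

Definition trace_porder (X : Type) (dX : set (R -> X)) : Prop :=
  trace_preorder dX /\
  (forall f g, dX f -> dX g -> trace_le dX f g -> trace_le dX g f ->
     same_trace f g).

Definition pospace (X : topologicalType) (le : X -> X -> Prop) : Prop :=
  hausdorff_space X /\
  (forall x, le x x) /\
  (forall x y, le x y -> le y x -> x = y) /\
  (forall x y z, le x y -> le y z -> le x z) /\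
  closed [set z : X * X | le z.1 z.2].

Definition pos_dipaths (X : topologicalType) (le : X -> X -> Prop)
  : set (R -> X) :=
  [set p | is_path p /\
     forall s t, I01 s -> I01 t -> s <= t -> le (p s) (p t)].

End DirectedSpaces.

(* Main.v *)
Require Import Defs.
From mathcomp Require Import all_boot all_order all_algebra.
From mathcomp Require Import all_classical all_reals all_analysis.
From mathcomp Require Import ring lra.
From Stdlib Require Import Relations.
Import Order.TTheory GRing.Theory Num.Theory numFieldNormedType.Exports.
Local Open Scope classical_set_scope.
Local Open Scope ring_scope.

Lemma within_comp (Y Z W : topologicalType) (A : set Y) (B : set Z)
  (g : Y -> Z) (f : Z -> W) :
 {within A, continuous g} -> (forall x, A x -> B (g x)) ->
 {within B, continuous f} -> {within A, continuous (f \o g)}.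
Proof.
move=> cg gAB cf; apply/subspace_continuousP => x Ax.
move/subspace_continuousP: cg => /(_ x Ax) cg.
move/subspace_continuousP: cf => /(_ (g x) (gAB x Ax)) cf.
apply: cvg_comp cf => P /= HP.
have := cg _ HP.
rewrite /= nbhs_simpl /= /within /= nbhs_simpl /=.
apply: filterS => y H Ay.
exact: H Ay (gAB _ Ay).
Qed.

Lemma within_eq (Y W : topologicalType) (A : set Y) (f g : Y -> W) :
  (forall x, A x -> f x = g x) -> {within A, continuous f} -> {within A, continuous g}.
Proof.
move=> e; apply: subspace_eq_continuous => x; rewrite inE; exact: e.
Qed.

Section S.
Variable R : realType.
Implicit Types (s t x y : R).

Lemma I01P t : I01 t <-> 0 <= t <= 1.
Proof. by rewrite /I01 /= in_itv. Qed.

Lemma leF x y : y < x -> (x <= y) = false.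
Proof. by move=> h; apply/negbTE; rewrite -ltNge. Qed.

Lemma affine_cont (a b : R) : continuous (fun t : R => t * a + b).
Proof.
move=> x; apply: (@continuousD _ _ _ (fun t : R => t * a) (fun _ => b)).
  exact: mulrr_continuous.
exact: cst_continuous.
Qed.

Lemma concat_path (Y : topologicalType) (p q : R -> Y) :
  is_path p -> is_path q -> p 1 = q 0 -> is_path (concat p q).
Proof.
rewrite /is_path => cp cq pq.
have -> : @I01 R = `[0, 2^-1] `|` `[2^-1, 1].
  apply/seteqP; split => t.
    move/I01P => /andP[t0 t1] /=; rewrite !in_itv /=.
    case: (lerP t (2^-1)) => h; [left|right]; apply/andP; split => //; lra.
  rewrite /= !in_itv /= => -[] /andP[h1 h2]; apply/I01P/andP; split; lra.
apply: withinU_continuous; try exact: itv_closed.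
  apply: (@within_eq _ _ _ (p \o (fun t => t * 2 + 0))).
    move=> t; rewrite /= in_itv /= => /andP[h1 h2].
    by rewrite /concat /= h2 addr0 mulrC.
  apply: within_comp => //.
    exact/continuous_subspaceT/affine_cont.
  move=> t; rewrite /= in_itv /= => /andP[h1 h2]; apply/I01P/andP; split; lra.
apply: (@within_eq _ _ _ (q \o (fun t => t * 2 + (-1)))).
  move=> t; rewrite /= in_itv /= => /andP[h1 h2].
  rewrite /concat /=; case: (lerP t (2^-1)) => h.
    have -> : t = 2^-1 by lra.
    have -> : 2 * 2^-1 = 1 :> R by rewrite mulfV.
    by rewrite pq; congr q; rewrite mulVf // subrr.
  by rewrite (mulrC t).
apply: within_comp => //.
  exact/continuous_subspaceT/affine_cont.
move=> t; rewrite /= in_itv /= => /andP[h1 h2]; apply/I01P/andP; split; lra.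
Qed.


Definition mono {Y : Type} (le : Y -> Y -> Prop) (p : R -> Y) :=
  forall s t, I01 s -> I01 t -> s <= t -> le (p s) (p t).

Lemma concat0 (Y : Type) (p q : R -> Y) : concat p q 0 = p 0.
Proof. by rewrite /concat ifT ?mulr0 // invr_ge0 ler0n. Qed.

Lemma concat1 (Y : Type) (p q : R -> Y) : concat p q 1 = q 1.
Proof. rewrite /concat leF; last lra. congr q; lra. Qed.

Lemma concat_mono (Y : Type) (le : Y -> Y -> Prop) (p q : R -> Y) :
  (forall a b c, le a b -> le b c -> le a c) ->
  mono le p -> mono le q -> p 1 = q 0 -> mono le (concat p q).
Proof.
move=> tr mp mq pq s t /I01P/andP[s0 s1] /I01P/andP[t0 t1] st; rewrite /concat.
case: (lerP s (2^-1)) => hs; case: (lerP t (2^-1)) => ht.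
- by apply: mp; try apply/I01P/andP; try split; lra.
- apply: (tr _ (p 1)); first by apply: mp; try apply/I01P/andP; try split; lra.
  by rewrite pq; apply: mq; try apply/I01P/andP; try split; lra.
- exfalso; clear -st ht hs; lra.
- by apply: mq; try apply/I01P/andP; try split; lra.
Qed.

Lemma mk_reparam (phi : R -> R) : is_path phi -> mono <=%R phi ->
  phi 0 = 0 -> phi 1 = 1 -> reparam phi.
Proof.
move=> cp mp p0 p1; split; first exact: cp.
split; first exact: mp.
have I0 : I01 (0:R) by apply/I01P; lra.
have I1 : I01 (1:R) by apply/I01P; lra.
apply/seteqP; split => y.
  case=> x Ix <-; apply/I01P/andP; split.
    by rewrite -p0; apply: mp => //; move/I01P: Ix => /andP[].
  by rewrite -p1; apply: mp => //; move/I01P: Ix => /andP[].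
move=> Iy; have := @IVT R phi 0 1 y ler01 cp.
rewrite p0 p1 /Num.min /Num.max ltr01 => /(_ _)[].
  by move/I01P: Iy.
by move=> c hc <-; exists c.
Qed.

Lemma reparam_prop (phi : R -> R) : reparam phi ->
  [/\ phi 0 = 0, phi 1 = 1 & forall t, I01 t -> I01 (phi t)].
Proof.
move=> [cp [mp im]].
have I0 : I01 (0:R) by apply/I01P; lra.
have I1 : I01 (1:R) by apply/I01P; lra.
have into : forall t, I01 t -> I01 (phi t).
  by move=> t It; rewrite -im; exists t.
split => //.
- have : I01 (0:R) by []. rewrite -{1}im => -[s Is e].
  have := mp 0 s I0 Is; move/I01P: Is => /andP[s0 _] /(_ s0).
  move/I01P: (into 0 I0) => /andP[h _]; rewrite e => h2; lra.
- have : I01 (1:R) by []. rewrite -{1}im => -[s Is e].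
  have := mp s 1 Is I1; move/I01P: Is => /andP[_ s1] /(_ s1).
  move/I01P: (into 1 I1) => /andP[_ h]; rewrite e => h2; lra.
Qed.


Lemma aff_path (a b : R) : is_path (fun s : R => s * a + b).
Proof. exact/continuous_subspaceT/affine_cont. Qed.

Lemma aff_mono (a b : R) : 0 <= a -> mono <=%R (fun s : R => s * a + b).
Proof. by move=> a0 s t _ _ st; rewrite lerD2r ler_wpM2r. Qed.

Lemma affc_path (phi : R -> R) (a b : R) : reparam phi ->
  is_path (fun s : R => phi s * a + b).
Proof.
move=> rp; case: (rp) => cp _; case: (reparam_prop _ rp) => _ _ into.
apply: (@within_comp _ _ _ _ (@setT R) phi (fun s => s * a + b)) => //.
exact/continuous_subspaceT/affine_cont.
Qed.

Lemma affc_mono (phi : R -> R) (a b : R) : 0 <= a -> reparam phi ->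
  mono <=%R (fun s : R => phi s * a + b).
Proof.
move=> a0 [_ [mp _]] s t Is It st; rewrite lerD2r ler_wpM2r //; exact: mp.
Qed.

Lemma cst_path (Y : topologicalType) (y : Y) : is_path (fun _ : R => y).
Proof. exact/continuous_subspaceT/cst_continuous. Qed.

Definition phiE : R -> R := concat (concat (fun _ => 0) (fun s => s * 1 + 0)) (fun _ => 1).

Lemma phiE_reparam : reparam phiE.
Proof.
apply: mk_reparam.
- apply: concat_path; first apply: concat_path.
  + exact: cst_path.
  + exact: aff_path.
  + by rewrite /= mul0r addr0.
  + exact: cst_path.
  + by rewrite concat1 mulr1 addr0.
- apply: concat_mono; first (by move=> ???; exact: le_trans); first apply: concat_mono.
  + by move=> ???; exact: le_trans.
  + by move=> *; exact: lexx.
  + exact: aff_mono.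
  + by rewrite /= mul0r addr0.
  + by move=> *; exact: lexx.
  + by rewrite concat1 mulr1 addr0.
- by rewrite /phiE !concat0.
- by rewrite /phiE concat1.
Qed.


Lemma lt_trans' : forall a b c : R, a <= b -> b <= c -> a <= c.
Proof. by move=> ???; exact: le_trans. Qed.

Definition psiL (phi : R -> R) : R -> R :=
  concat (fun s => phi s * 2^-1 + 0) (fun s => s * 2^-1 + 2^-1).
Definition psiR (phi : R -> R) : R -> R :=
  concat (fun s => s * 2^-1 + 0) (fun s => phi s * 2^-1 + 2^-1).
Definition phiA : R -> R :=
  concat (concat (fun s => s * 2^-1 + 0) (fun s => s * 4^-1 + 2^-1))
    (fun s => s * 4^-1 + 3/4).

Lemma psiL_reparam phi : reparam phi -> reparam (psiL phi).
Proof.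
move=> rp; case: (reparam_prop _ rp) => p0 p1 _.
have e : phi 1 * 2^-1 + 0 = 0 * 2^-1 + 2^-1 by rewrite p1; lra.
apply: mk_reparam.
- apply: concat_path => //; [exact: affc_path | exact: aff_path].
- apply: concat_mono => //; [exact: lt_trans' | exact: affc_mono | exact: aff_mono].
- by rewrite /psiL concat0 p0; lra.
- by rewrite /psiL concat1; lra.
Qed.

Lemma psiR_reparam phi : reparam phi -> reparam (psiR phi).
Proof.
move=> rp; case: (reparam_prop _ rp) => p0 p1 _.
have e : 1 * 2^-1 + 0 = phi 0 * 2^-1 + 2^-1 by rewrite p0; lra.
apply: mk_reparam.
- apply: concat_path => //; [exact: aff_path | exact: affc_path].
- apply: concat_mono => //; [exact: lt_trans' | exact: aff_mono | exact: affc_mono].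
- by rewrite /psiR concat0; lra.
- by rewrite /psiR concat1 p1; lra.
Qed.

Lemma phiA_reparam : reparam phiA.
Proof.
have e1 : 1 * 2^-1 + 0 = 0 * 4^-1 + 2^-1 :> R by lra.
have e2 : concat (fun s : R => s * 2^-1 + 0) (fun s => s * 4^-1 + 2^-1) 1
   = 0 * 4^-1 + 3/4 by rewrite concat1; lra.
apply: mk_reparam.
- apply: concat_path => //; [apply: concat_path => //|]; exact: aff_path.
- apply: concat_mono => //; [exact: lt_trans' | apply: concat_mono => // |];
    try exact: lt_trans'; apply: aff_mono; lra.
- by rewrite /phiA !concat0; lra.
- by rewrite /phiA concat1; lra.
Qed.


Lemma negle x y : ~~ (x <= y) -> y < x.
Proof. by rewrite -ltNge. Qed.

Ltac splitifs := repeat (case: ifP => [?|/negbT/negle ?]).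

Lemma step_E1 (Y : Type) (f u v : R -> Y) :
  (forall t, I01 t -> u t = f 0) -> (forall t, I01 t -> v t = f 1) ->
  reparam_step f (concat (concat u f) v).
Proof.
move=> hu hv; exists phiE; split; first exact: phiE_reparam.
move=> t /I01P/andP[t0 t1]; rewrite /phiE /concat; splitifs;
  try (exfalso; lra).
- by rewrite hu //; apply/I01P/andP; split; lra.
- by f_equal; lra.
- by rewrite hv //; apply/I01P/andP; split; lra.
Qed.

Lemma step_L (Y : Type) (p q r : R -> Y) :
  reparam_step p q -> reparam_step (concat p r) (concat q r).
Proof.
move=> [phi [rp e]]; case: (reparam_prop _ rp) => _ _ into.
exists (psiL phi); split; first exact: psiL_reparam.
move=> t /I01P/andP[t0 t1]; rewrite /psiL /concat.
have I2 : t <= 2^-1 -> I01 (2 * t) by move=> h; apply/I01P/andP; split; lra.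
case: (lerP t (2^-1)) => h.
  have /I01P/andP[f0 f1] := into _ (I2 h).
  rewrite e; last exact: I2.
  splitifs; try (exfalso; lra).
  by f_equal; lra.
splitifs; try (exfalso; lra).
by f_equal; lra.
Qed.

Lemma step_R (Y : Type) (p q r : R -> Y) : r 1 = p 0 ->
  reparam_step p q -> reparam_step (concat r p) (concat r q).
Proof.
move=> rp0 [phi [rp e]]; case: (reparam_prop _ rp) => _ _ into.
exists (psiR phi); split; first exact: psiR_reparam.
move=> t /I01P/andP[t0 t1]; rewrite /psiR /concat.
have I2 : 2^-1 < t -> I01 (2 * t - 1) by move=> h; apply/I01P/andP; split; lra.
move: rp0; case: (lerP t (2^-1)) => h.
  splitifs; try (move=> _; exfalso; lra).
  by move=> _; f_equal; lra.
have /I01P/andP[f0 f1] := into _ (I2 h).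
rewrite e; last exact: I2.
splitifs; try (move=> _; exfalso; lra).
  move=> rp0; have -> : phi (2 * t - 1) = 0 by clear rp0; lra.
  rewrite -rp0; clear rp0; f_equal; lra.
by move=> _; f_equal; lra.
Qed.

Lemma step_A (Y : Type) (a b c : R -> Y) :
  reparam_step (concat a (concat b c)) (concat (concat a b) c).
Proof.
exists phiA; split; first exact: phiA_reparam.
move=> t /I01P/andP[t0 t1]; rewrite /phiA /concat; splitifs;
  try (exfalso; lra); by f_equal; lra.
Qed.


Lemma I0 : I01 (0:R). Proof. by apply/I01P; rewrite lexx ler01. Qed.
Lemma I1 : I01 (1:R). Proof. by apply/I01P; rewrite lexx ler01. Qed.

Lemma st_ends (Y : Type) (p q : R -> Y) : same_trace p q -> p 0 = q 0 /\ p 1 = q 1.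
Proof.
elim => {p q}.
- move=> p q [phi [rp e]]; case: (reparam_prop _ rp) => p0 p1 _.
  by rewrite !e ?p0 ?p1 //; [exact: I1 | exact: I0].
- by [].
- by move=> p q _ [-> ->].
- by move=> p q r _ [-> ->] _ [-> ->].
Qed.
Arguments st_ends {Y p q}.

Lemma st_L (Y : Type) (p p' r : R -> Y) :
  same_trace p p' -> same_trace (concat p r) (concat p' r).
Proof.
elim => {p p'}.
- by move=> p q h; apply: rst_step; exact: step_L.
- by move=> p; apply: rst_refl.
- by move=> p q _ h; apply: rst_sym.
- by move=> p q s _ h1 _ h2; apply: rst_trans h2.
Qed.

Lemma st_R (Y : Type) (p p' r : R -> Y) : r 1 = p 0 ->
  same_trace p p' -> same_trace (concat r p) (concat r p').
Proof.
move=> rp h; move: h rp; elim => {p p'}.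
- by move=> p q h rp; apply: rst_step; exact: step_R.
- by move=> p _; apply: rst_refl.
- move=> p q hpq h rp; apply: rst_sym; apply: h.
  by rewrite rp; case: (st_ends hpq).
- move=> p q s hpq h1 _ h2 rp; apply: rst_trans (h1 rp) (h2 _).
  by rewrite rp; case: (st_ends hpq).
Qed.

Lemma st_A (Y : Type) (a b c : R -> Y) :
  same_trace (concat (concat a b) c) (concat a (concat b c)).
Proof. by apply: rst_sym; apply: rst_step; exact: step_A. Qed.


Lemma st_trans (Y : Type) (p q r : R -> Y) :
  same_trace p q -> same_trace q r -> same_trace p r.
Proof. exact: rst_trans. Qed.
Lemma st_sym (Y : Type) (p q : R -> Y) : same_trace p q -> same_trace q p.
Proof. exact: rst_sym. Qed.
Arguments st_trans {Y p} q {r}.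
Arguments st_sym {Y p q}.

Lemma preorder_gen (X : Type) (dX : set (R -> X)) :
  (forall c : X, dX (fun _ => c)) ->
  (forall p q, dX p -> dX q -> p 1 = q 0 -> dX (concat p q)) ->
  trace_preorder dX.
Proof.
move=> hc hcat; split; [|split].
- move=> f f' g g' _ _ _ _ ff gg [u [v [du [dv [uf [fv hg]]]]]].
  case: (st_ends ff) => e0 e1.
  exists u, v; split => //; split => //; split; first by rewrite -e0.
  split; first by rewrite -e1.
  apply: st_trans _ (st_sym gg) _; apply: st_trans _ hg _.
  by apply: st_L; apply: st_R.
- move=> f _; exists (fun _ => f 0), (fun _ => f 1).
  do 4 (split => //).
  by apply: rst_step; apply: step_E1.
- move=> f g h _ _ _ [u1 [v1 [du1 [dv1 [u1f [fv1 hg]]]]]]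
    [u2 [v2 [du2 [dv2 [u2g [gv2 hh]]]]]].
  case: (st_ends hg); rewrite !concat0 !concat1 => g0 g1.
  exists (concat u2 u1), (concat v1 v2).
  split; first by apply: hcat => //; rewrite u2g g0.
  split; first by apply: hcat => //; rewrite -g1.
  split; first by rewrite concat1.
  split; first by rewrite concat0.
  apply: st_trans _ hh _.
  apply: st_trans _; first by apply: st_L; apply: st_R u2g hg.
  apply: st_trans _; first exact: st_A.
  apply: st_trans _; first by apply: st_R; last exact: st_A; rewrite !concat0 u2g g0.
  apply: st_trans _; first exact: st_sym (st_A _ _ _ _).
  apply: st_L; exact: st_sym (st_A _ _ _ _).
Qed.


Lemma pos_closed (X : topologicalType) (le : X -> X -> Prop) : pospace le ->
  (forall c : X, @pos_dipaths R X le (fun _ : R => c)) /\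
  (forall p q, @pos_dipaths R X le p -> @pos_dipaths R X le q -> p 1 = q 0 ->
     @pos_dipaths R X le (concat p q)).
Proof.
move=> [_ [rf [_ [tr _]]]]; split.
  by move=> c; split; [exact: cst_path | move=> *; exact: rf].
move=> p q [cp mp] [cq mq] pq; split; first exact: concat_path.
by apply: concat_mono => //; move=> a b c; exact: tr.
Qed.

Lemma pos_antisym (X : topologicalType) (le : X -> X -> Prop) : pospace le ->
  forall f g, @pos_dipaths R X le f -> @pos_dipaths R X le g ->
  trace_le (@pos_dipaths R X le) f g -> trace_le (@pos_dipaths R X le) g f ->
  same_trace f g.
Proof.
move=> [_ [rf [anti [tr _]]]] f g _ _
  [u [v [[_ mu] [[_ mv] [uf [fv hg]]]]]] [u' [v' [[_ mu'] [[_ mv'] [ug [gv hf]]]]]].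
case: (st_ends hg); rewrite !concat0 !concat1 => g0 g1.
case: (st_ends hf); rewrite !concat0 !concat1 => f0 f1.
have M01 : (0:R) <= 1 by exact: ler01.
have e0 : f 0 = g 0.
  apply: anti.
    by rewrite f0 -ug; apply: mu' => //; [exact: I0 | exact: I1].
  by rewrite g0 -uf; apply: mu => //; [exact: I0 | exact: I1].
have e1 : f 1 = g 1.
  apply: anti.
    by rewrite fv g1; apply: mv => //; [exact: I0 | exact: I1].
  by rewrite gv f1; apply: mv' => //; [exact: I0 | exact: I1].
have hu : forall t, I01 t -> u t = f 0.
  move=> t It; move/I01P: (It) => /andP[t0 t1]; apply: anti.
    by rewrite -uf; apply: mu => //; exact: I1.
  by rewrite e0 g0; apply: mu => //; exact: I0.
have hv : forall t, I01 t -> v t = f 1.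
  move=> t It; move/I01P: (It) => /andP[t0 t1]; apply: anti.
    by rewrite e1 g1; apply: mv => //; exact: I1.
  by rewrite fv; apply: mv => //; exact: I0.
apply: st_trans _ (st_sym hg).
by apply: rst_step; apply: step_E1.
Qed.

End S.

Theorem lemma5p1 (R : realType) :
  (forall (X : topologicalType) (dX : set (R -> X)),
      dspace dX -> trace_preorder dX) /\
  (forall (X : topologicalType) (le : X -> X -> Prop),
      pospace le -> trace_porder (@pos_dipaths R X le)).
Proof.
split.
  move=> X dX [_ hc _ hcat]; exact: preorder_gen.
move=> X le hp; case: (pos_closed R X le hp) => hc hcat; split.
  exact: preorder_gen.
exact: pos_antisym.
Qed.
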